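(* Let $A,B$ be $n\times n$ matrices and, for integers $i,j\ge0$, let $\mathrm{sym}_{ij}(A,B)$ denote the sum of all (distinct) words in $A$ and $B$ containing exactly $i$ letters $A$ and $j$ letters $B$ (so $\mathrm{sym}_{00}=I$). (a) $[\mathrm{sym}_{i,j+1}(A,B),A]+[\mathrm{sym}_{i+1,j}(A,B),B]=0$ for all $i,j\ge0$. (b) If $A=S$ is symmetric and $B=N$ is skew-symmetric, then $\mathrm{sym}_{ij}(S,N)$ is symmetric if $j$ is even and skew-symmetric if $j$ is odd. (c) Each $\mathrm{sym}_{n-\ell,\ell}(A,B)$, $\ell=0,\dots,n$, is a linear combination of symmetrizers $\mathrm{sym}_{r,s}(A,B)$ with $r+s<n$. (d) For generic pairs $(A,B)$ (i.e., for an open dense set of pairs), the matrices $\mathrm{sym}_{k-\ell,\ell}(A,B)$, $0\le\ell\le k\le n-1$, are linearly independent. The same holds for generic pairs with $A=S$ real symmetric and $B=N$ real skew-symmetric. *)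

(* Defs.v *)
From HB Require Import structures.
From mathcomp Require Import all_boot all_order all_algebra.
From mathcomp Require Import all_classical all_reals all_analysis.
Set Implicit Arguments. Unset Strict Implicit. Unset Printing Implicit Defensive.
Import Order.TTheory GRing.Theory Num.Theory.
Local Open Scope ring_scope.

(* A word with i letters A and j letters B is encoded by w : {ffun 'I_(i+j) -> bool}
   with exactly j entries true (true = B, false = A); its value is the ordered
   matrix product of its letters, left to right. *)
Definition word_val (R : pzRingType) (n m : nat) (A B : 'M[R]_n)
  (w : {ffun 'I_m -> bool}) : 'M[R]_n :=
  \big[mulmx/1%:M]_(k < m) (if w k then B else A).

Definition sym_ij (R : pzRingType) (n : nat) (i j : nat) (A B : 'M[R]_n) : 'M[R]_n :=
  \sum_(w : {ffun 'I_(i + j) -> bool} | #|[pred k | w k]| == j) word_val A B w.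

Definition lie_br (R : pzRingType) (n : nat) (X Y : 'M[R]_n) : 'M[R]_n :=
  X *m Y - Y *m X.

Definition mx_is_symmetric (R : pzRingType) (n : nat) (X : 'M[R]_n) : Prop := X^T = X.
Definition mx_is_skew (R : pzRingType) (n : nat) (X : 'M[R]_n) : Prop := X^T = - X.

Definition sym_family_independent (R : fieldType) (n : nat) (A B : 'M[R]_n) : Prop :=
  forall c : nat -> nat -> R,
    \sum_(k < n) \sum_(l < k.+1) c k l *: sym_ij (k - l) l A B = 0 ->
    forall k l : nat, (l <= k)%N -> (k < n)%N -> c k l = 0.

(* Main.v *)
Require Import Defs.
From HB Require Import structures.
From mathcomp Require Import all_boot all_order all_algebra.
From mathcomp Require Import all_classical all_reals all_analysis.
From mathcomp Require Import ring zify.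
From Stdlib Require Import Lia.
Import Order.TTheory GRing.Theory Num.Theory.
Import numFieldNormedType.Exports.
Local Open Scope classical_set_scope.
Local Open Scope ring_scope.
Set Implicit Arguments. Unset Strict Implicit. Unset Printing Implicit Defensive.

Section SY.
Variables (R : pzRingType) (n : nat) (A B : 'M[R]_n).

Fixpoint sy (k m : nat) : 'M[R]_n :=
  match k with
  | 0 => if m == 0%N then 1%:M else 0
  | k'.+1 => A *m sy k' m + (if m is m'.+1 then B *m sy k' m' else 0)
  end.

Definition fcons m (b : bool) (w : {ffun 'I_m -> bool}) : {ffun 'I_m.+1 -> bool} :=
  [ffun k : 'I_m.+1 => if unlift ord0 k is Some k' then w k' else b].

Lemma card_fcons m b (w : {ffun 'I_m -> bool}) :
  #|[pred k | fcons b w k]| = (b + #|[pred k | w k]|)%N.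
Proof.
rewrite -!sum1_card !big_mkcond big_ord_recl /= !inE ffunE unlift_none.
congr (_ + _)%N; rewrite [RHS]big_mkcond.
by apply: eq_bigr => i _; rewrite !inE ffunE liftK.
Qed.

Lemma word_fcons m b (w : {ffun 'I_m -> bool}) :
  word_val A B (fcons b w) = (if b then B else A) *m word_val A B w.
Proof.
rewrite /word_val big_ord_recl /= ffunE unlift_none; congr (_ *m _).
by apply: eq_bigr => i _; rewrite ffunE liftK.
Qed.

Lemma fcons_bij m : bijective (fun p : bool * {ffun 'I_m -> bool} => fcons p.1 p.2).
Proof.
exists (fun w : {ffun 'I_m.+1 -> bool} => (w ord0, [ffun k => w (lift ord0 k)])).
  by case=> b w /=; rewrite ffunE unlift_none; congr (_, _); apply/ffunP => k; rewrite !ffunE liftK.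
move=> w /=; apply/ffunP => k; rewrite !ffunE.
by case: unliftP => [j ->|->]; rewrite ?ffunE.
Qed.

Lemma sum_words_sy m j :
  \sum_(w : {ffun 'I_m -> bool} | #|[pred k | w k]| == j) word_val A B w = sy m j.
Proof.
elim: m j => [|m IH] j /=.
  case: eqP => [->|/eqP j0].
    rewrite (big_pred1 [ffun => false]); first by rewrite /word_val big_ord0.
    move=> w /=; apply/idP/idP => _; apply/eqP; last first.
      by rewrite -sum1_card big_ord0.
    by apply/ffunP => -[].
  rewrite big1 // => w; rewrite -sum1_card big_ord0 => /eqP h; by rewrite -h eqxx in j0.
rewrite (reindex (fun p : bool * {ffun 'I_m -> bool} => fcons p.1 p.2)) /=; last first.
  by apply: onW_bij; exact: fcons_bij.
rewrite -(pair_big_dep xpredT (fun b w => #|[pred k | fcons b w k]| == j)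
   (fun b w => word_val A B (fcons b w))) /=.
rewrite big_bool /= addrC; congr (_ + _).
  under eq_bigl => w do rewrite card_fcons add0n.
  under eq_bigr => w _ do rewrite word_fcons.
  by rewrite -mulmx_sumr IH.
under eq_bigl => w do rewrite card_fcons.
under eq_bigr => w _ do rewrite word_fcons.
case: j => [|j].
  by rewrite big_pred0 // => w.
by rewrite -mulmx_sumr -IH.
Qed.

Lemma sym_ij_sy i j : sym_ij i j A B = sy (i + j) j.
Proof. exact: sum_words_sy. Qed.

End SY.

Section SY2.
Variables (R : pzRingType) (n : nat) (A B : 'M[R]_n).
Local Notation sy := (sy A B).

Lemma sy_right k m :
  sy k.+1 m = sy k m *m A + (if m is m'.+1 then sy k m' *m B else 0).
Proof.
elim: k m => [|k IH] m.
  case: m => [|[|m]] /=; rewrite ?mulmx1 ?mul1mx ?mulmx0 ?mul0mx ?addr0 ?add0r //.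
have L p q : sy p.+1 q = A *m sy p q + (if q is q'.+1 then B *m sy p q' else 0) by [].
rewrite (L k.+1 m).
case: m => [|[|m]]; rewrite ?[in RHS]L ?IH ?mulmxDl ?mulmxDr ?mulmxA ?addr0 ?mul0mx ?mulmx0 ?add0r //.
  by rewrite !addr0 -!addrA [X in _ + X = _]addrC.
by rewrite addrACA.
Qed.

Lemma sy_gt k m : (k < m)%N -> sy k m = 0.
Proof.
elim: k m => [|k IH] m km; first by case: m km.
rewrite /= IH ?mulmx0 ?add0r; last by apply: ltn_trans km.
by case: m km => [//|m] km; rewrite IH ?mulmx0.
Qed.

Lemma lie_sy k j :
  lie_br (sy k j.+1) A + lie_br (sy k j) B = 0.
Proof.
rewrite /lie_br.
have h1 := sy_right k j.+1; have h2 : sy k.+1 j.+1 = A *m sy k j.+1 + B *m sy k j by [].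
by rewrite addrACA -opprD -h2 h1 subrr.
Qed.

End SY2.

Section SY3.
Variables (R : comPzRingType) (n : nat).

Lemma sy_tr (S N : 'M[R]_n) k m : S^T = S -> N^T = - N ->
  (sy S N k m)^T = (-1) ^+ m *: sy S N k m.
Proof.
move=> hS hN; elim: k m => [|k IH] m.
  by case: m => [|m] /=; rewrite ?trmx1 ?scale1r ?trmx0 ?scaler0.
have L p q : sy S N p.+1 q = S *m sy S N p q + (if q is q'.+1 then N *m sy S N p q' else 0) by [].
rewrite [in RHS]sy_right L linearD /= trmx_mul IH hS -scalemxAl scalerDr.
case: m => [|m] /=; first by rewrite trmx0 scaler0.
congr (_ + _); rewrite trmx_mul IH hN mulmxN -scalemxAl exprS mulN1r scaleNr //.
Qed.

Lemma map_sy (R' : comPzRingType) (f : {rmorphism R -> R'}) (A B : 'M[R]_n) k m :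
  map_mx f (sy A B k m) = sy (map_mx f A) (map_mx f B) k m.
Proof.
elim: k m => [|k IH] m /=.
  by case: (m == 0%N); rewrite ?map_mx1 ?map_mx0.
rewrite map_mxD map_mxM IH; case: m => [|m]; by rewrite ?map_mx0 ?map_mxM ?IH.
Qed.

Lemma sy_pow (X Y : 'M[R]_n) (a b : R) k :
  (a *: X + b *: Y) ^+ k = \sum_(m < k.+1) (a ^+ (k - m) * b ^+ m) *: sy X Y k m.
Proof.
elim: k => [|k IH].
  by rewrite expr0 big_ord_recl big_ord0 addr0 /= expr0 mulr1 scale1r.
rewrite exprS IH mulrDl !mulr_sumr.
under [in RHS]eq_bigr => m _ do rewrite [sy X Y k.+1 m]/= scalerDr.
rewrite big_split /=; congr (_ + _).
  rewrite [in RHS]big_ord_recr /= sy_gt // mulmx0 scaler0 addr0.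
  apply: eq_bigr => m _; rewrite -mulmxE -scalemxAl -scalemxAr scalerA.
  by rewrite subSn ?exprS ?mulrA // -ltnS.
rewrite [in RHS]big_ord_recl /= scaler0 add0r.
apply: eq_bigr => m _; rewrite -mulmxE -scalemxAl -scalemxAr scalerA /=.
rewrite /bump /= add1n subSS exprS; congr (_ *: _).
by rewrite mulrCA mulrA.
Qed.

End SY3.

Lemma reidx_nat (V : nmodType) n (F : nat -> nat -> V) :
  \sum_(0 <= r < n) \sum_(0 <= s < n - r) F (r + s)%N s =
  \sum_(0 <= k < n) \sum_(0 <= s < k.+1) F k s.
Proof.
elim: n => [|n IH]; first by rewrite !big_geq.
rewrite [in RHS]big_nat_recr //= -IH.
rewrite (@eq_big_nat _ _ _ 0 n.+1 _
   (fun r => \sum_(0 <= s < n - r) F (r + s)%N s + F n (n - r)%N)); last first.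
  move=> r /andP[_ rn]; have rn' : (r <= n)%N by rewrite -ltnS.
  by rewrite subSn // big_nat_recr //= subnKC.
rewrite big_split /=; congr (_ + _).
  by rewrite big_nat_recr //= subnn (@big_geq _ _ _ 0 0) // addr0.
rewrite big_nat_rev /=; apply: eq_big_nat => i /andP[_ hi].
have hi' : (i <= n)%N by rewrite -ltnS.
by rewrite add0n subSS subKn.
Qed.

Lemma reidx (V : nmodType) n (F : nat -> nat -> V) :
  \sum_(r < n) \sum_(s < n - r) F (r + s)%N s =
  \sum_(k < n) \sum_(s < k.+1) F k s.
Proof.
transitivity (\sum_(0 <= r < n) \sum_(0 <= s < n - r) F (r + s)%N s).
  by rewrite big_mkord; apply: eq_bigr => r _; rewrite big_mkord.
rewrite reidx_nat big_mkord; apply: eq_bigr => r _; by rewrite big_mkord.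
Qed.

Section CH.
Variables (K : comNzRingType) (n' : nat) (A B : 'M[K]_n'.+1).
Local Notation n := n'.+1.
Definition Mt : 'M[{poly K}]_n := map_mx polyC A + 'X *: map_mx polyC B.

Lemma Mt_pow k : Mt ^+ k = \sum_(m < k.+1) 'X^m *: map_mx polyC (sy A B k m).
Proof.
rewrite /Mt -[map_mx polyC A]scale1r sy_pow; apply: eq_bigr => m _.
by rewrite expr1n mul1r map_sy.
Qed.

Lemma Mt_CH : Mt ^+ n = - \sum_(i < n) (char_poly Mt)`_i *: Mt ^+ i.
Proof.
have CH := Cayley_Hamilton Mt.
have hp : horner_mx Mt (char_poly Mt) = \sum_(i < n.+1) (char_poly Mt)`_i *: Mt ^+ i.
  rewrite -[X in horner_mx _ X]coefK poly_def size_char_poly linear_sum; apply: eq_bigr => i _.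
  by rewrite linearZ rmorphXn /= horner_mx_X.
rewrite hp big_ord_recr /= in CH.
have lc : (char_poly Mt)`_n = 1.
  by have := char_poly_monic Mt; rewrite monicE lead_coefE size_char_poly => /eqP.
by rewrite lc scale1r in CH; apply/eqP; rewrite -addr_eq0 addrC CH.
Qed.

Definition cc l k s : K := - (if (l < s)%N then 0 else ((char_poly Mt)`_k)`_(l - s)).

Lemma coef_Mt_pow k l a b : ((Mt ^+ k) a b)`_l = sy A B k l a b.
Proof.
rewrite Mt_pow summxE coef_sum.
have H : forall m : 'I_k.+1, (if (l < m)%N then 0 else if (l - m)%N == 0%N then sy A B k m a b else 0)
   = if (m == l :> nat) then sy A B k m a b else 0.
  move=> m; case: ltngtP => //; last by move=> ->; rewrite subnn.
  by move=> h; rewrite (_ : (l - m)%N == 0%N = false) //; apply/negbTE; rewrite -lt0n subn_gt0.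
under eq_bigr => m _ do rewrite !mxE coefXnM coefC H.
rewrite -big_mkcond /= (big_ord1_eq _ (fun x => sy A B k x a b)); case: ltnP => // kl.
by rewrite sy_gt ?mxE.
Qed.

Lemma coef_pMt_pow (p : {poly K}) k l a b :
  ((p *: Mt ^+ k) a b)`_l = \sum_(s < k.+1) (if (l < s)%N then 0 else p`_(l - s)) * sy A B k s a b.
Proof.
rewrite mxE Mt_pow summxE mulr_sumr coef_sum; apply: eq_bigr => s _.
by rewrite !mxE mulrA coefMC coefMXn.
Qed.

Lemma CH_sy l :
  sy A B n l = \sum_(k < n) \sum_(s < k.+1) cc l k s *: sy A B k s.
Proof.
apply/matrixP => a b.
have := congr1 (fun M : 'M[{poly K}]_n => (M a b)`_l) Mt_CH => /=.
rewrite coef_Mt_pow => ->.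
rewrite mxE coefN summxE coef_sum -sumrN summxE; apply: eq_bigr => k _.
rewrite coef_pMt_pow -sumrN summxE; apply: eq_bigr => s _.
by rewrite mxE /cc mulNr.
Qed.
End CH.

Section Walk.
Variable n : nat.
Local Open Scope nat_scope.

Fixpoint w (k m i s : nat) : nat :=
  match k with
  | 0 => ((m == 0) && (i == s) : nat)
  | k'.+1 => (if s.+1 < n then w k' m i s.+1 else 0) +
             (if m is m'.+1 then (if 0 < s then w k' m' i s.-1 else 0) else 0)
  end.

Lemma w_gt k m i s : k < m -> w k m i s = 0.
Proof.
elim: k m s => [|k IH] m s km /=; first by case: m km.
rewrite (IH m); last lia.
case: m km => [//|m] km; rewrite (IH m); last lia.
by case: ifP; case: ifP.
Qed.

Lemma w_supp k m i s : w k m i s != 0 -> m <= k /\ i + m = s + (k - m).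
Proof.
elim: k m s => [|k IH] m s /=.
  by case: m => [|m] //=; case: (i =P s) => [->|] //= _; lia.
case: ifP => hs; case: m => [|m]; rewrite ?addn0 ?add0n.
- move=> /IH; lia.
- case: ifP => h0; rewrite ?addn0.
    case: (w k m.+1 i s.+1 =P 0) => [->|/eqP /IH]; last lia.
    by rewrite add0n => /IH; lia.
  by move=> /IH; lia.
- by [].
- case: ifP => h0 //; move=> /IH; lia.
Qed.

Lemma w_int k m i s : m <= k -> m <= s -> s + (k - m) < n -> i + m = s + (k - m) ->
  w k m i s = 'C(k, m).
Proof.
elim: k m s => [|k IH] m s.
  by case: m => //= _ _ _; rewrite !addn0 => ->; rewrite eqxx.
move=> mk ms sn e /=.
have [mk'|mk'] := leqP m k.
  have h1 : s.+1 < n by clear IH; lia.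
  rewrite h1 (IH m s.+1) //; try (clear IH; lia).
  case: m mk ms sn e mk' h1 => [|m] mk ms sn e mk' h1; first by rewrite addn0 bin0.
  have h2 : 0 < s by clear IH; lia.
  rewrite h2 (IH m s.-1) ?binS //; clear IH; lia.
have em : m = k.+1 by clear IH; lia.
subst m; rewrite w_gt // if_same add0n.
have h2 : 0 < s by clear IH; lia.
rewrite h2 (IH k s.-1) ?binn //; clear IH; lia.
Qed.

Lemma w_le k m i s : w k m i s <= 'C(k, m).
Proof.
elim: k m s => [|k IH] m s /=; first by case: m => //=; case: (i == s).
case: m => [|m]; rewrite ?bin0 ?binS.
  by rewrite addn0; case: ifP => // _; rewrite -(bin0 k) IH.
apply: leq_add; first by case: ifP.
by case: ifP.
Qed.

Lemma w_lt k m i s : s < m -> m <= k -> w k m i s < 'C(k, m).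
Proof.
elim: k m s => [|k IH] m s; first by case: m.
move=> sm mk /=; case: m sm mk => [//|m] sm mk.
rewrite binS.
have h1 : (if s.+1 < n then w k m.+1 i s.+1 else 0) <= 'C(k, m.+1).
  by case: ifP => // _; apply: w_le.
case: s sm h1 => [|s] sm h1 /=; last first.
  rewrite -addnS; apply: leq_add => //; apply: IH; lia.
rewrite addn0; apply: (leq_ltn_trans h1); rewrite -[X in X < _]addn0 ltn_add2l.
by rewrite bin_gt0; lia.
Qed.

End Walk.

Section Witness.
Variables (R : realType) (n' : nat).
Local Notation n := n'.+1.

Definition Jm : 'M[R]_n := \matrix_(i, j) ((i : nat) == j.+1)%:R.
Definition S0 : 'M[R]_n := Jm + Jm^T.
Definition N0 : 'M[R]_n := Jm - Jm^T.

Lemma sum_ord_eq (F : nat -> R) (j : nat) :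
  \sum_(r < n) F r * ((r : nat) == j)%:R = if (j < n)%N then F j else 0.
Proof.
have h (r : 'I_n) : F r * ((r : nat) == j)%:R = if (r : nat) == j then F r else 0.
  by case: eqP; rewrite ?mulr1 ?mulr0.
under eq_bigr => r _ do rewrite h.
by rewrite -big_mkcond /= (big_ord1_eq _ F).
Qed.

Lemma sy_J k m (i s : 'I_n) : sy Jm Jm^T k m i s = (w n k m i s)%:R.
Proof.
elim: k m s => [|k IH] m s.
  rewrite /=; case: (m == 0%N); last by rewrite mxE.
  by rewrite mxE.
rewrite sy_right mxE [w n k.+1 m i s]/= natrD; congr (_ + _).
  rewrite mxE.
  under eq_bigr => r _ do rewrite IH mxE.
  rewrite (sum_ord_eq (fun x => (w n k m i x)%:R)).
  by case: ifP.
case: m => [|m]; first by rewrite mxE.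
rewrite mxE.
under eq_bigr => r _ do rewrite IH !mxE.
case: s => [[|s] hs] /=.
  by rewrite big1 // => r _; rewrite mulr0.
under eq_bigr => r _ do rewrite eqSS eq_sym.
rewrite (sum_ord_eq (fun x => (w n k m i x)%:R)).
by rewrite ifT // (ltn_trans _ hs).
Qed.

Definition Pk (k m : nat) : {poly R} := (1 + 'X) ^+ (k - m) * (1 - 'X) ^+ m.

Lemma Mt_S0N0 : Mt S0 N0 = (1 + 'X) *: map_mx polyC Jm + (1 - 'X) *: map_mx polyC Jm^T.
Proof.
apply/matrixP => i j; rewrite !mxE polyCD polyCB.
set a := _%:R; set b := _%:R.
ring.
Qed.

Lemma sy_S0N0 k l (i s : 'I_n) :
  sy S0 N0 k l i s = \sum_(m < k.+1) (Pk k m)`_l * (w n k m i s)%:R.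
Proof.
rewrite -(coef_Mt_pow S0 N0 k l i s) Mt_S0N0 sy_pow summxE coef_sum.
apply: eq_bigr => m _; rewrite -map_sy !mxE coefMC sy_J.
by rewrite /Pk.
Qed.

End Witness.

Lemma sum2_single (V : zmodType) n (F : nat -> nat -> V) K m :
  (K < n)%N -> (m <= K)%N ->
  (forall k m', (k < n)%N -> (m' <= k)%N -> (k != K) || (m' != m) -> F k m' = 0) ->
  \sum_(k < n) \sum_(m' < k.+1) F k m' = F K m.
Proof.
move=> Kn mK H.
rewrite (bigD1 (Ordinal Kn)) //= [X in _ + X]big1 ?addr0; last first.
  move=> k /eqP kK; apply: big1 => m' _; apply: H => //; first by rewrite -ltnS.
  by apply/orP; left; apply/eqP => e; apply: kK; apply: val_inj.
have mK' : (m < K.+1)%N by [].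
rewrite (bigD1 (Ordinal mK')) //= [X in _ + X]big1 ?addr0 // => m' /eqP mm.
apply: H => //; first by rewrite -ltnS.
by apply/orP; right; apply/eqP => e; apply: mm; apply: val_inj.
Qed.

Section Tri.
Variables (R : realType) (n : nat) (g : nat -> nat -> R).
Hypothesis rel : forall i s : nat, (i < n)%N -> (s < n)%N ->
  \sum_(k < n) \sum_(m < k.+1) (w n k m i s)%:R * g k m = 0.

Lemma tri_step K : (K < n)%N ->
  (forall k m, (K < k)%N -> (k < n)%N -> (m <= k)%N -> g k m = 0) ->
  forall m, (m <= K)%N -> g K m = 0.
Proof.
move=> Kn H m mK.
have [->|m0] := eqVneq m 0%N.
  have := rel Kn (leq_ltn_trans (leq0n K) Kn).
  rewrite (@sum2_single _ _ (fun k m' => (w n k m' K 0)%:R * g k m') K 0 Kn (leq0n K)); last first.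
    move=> k m' kn m'k km; have [Kk|kK] := ltnP K k; first by rewrite H ?mulr0.
    case: (w n k m' K 0 =P 0%N) => [->|/eqP /w_supp hs]; first by rewrite mul0r.
    exfalso; move: km; case: (k =P K) => [e|/eqP]; last by lia.
    rewrite /=; case: (m' =P 0%N) => //; lia.
  rewrite w_int ?bin0 ?mul1r //; lia.
have [->|mK'] := eqVneq m K.
  have := rel (leq_ltn_trans (leq0n K) Kn) Kn.
  rewrite (@sum2_single _ _ (fun k m' => (w n k m' 0 K)%:R * g k m') K K Kn (leqnn K)); last first.
    move=> k m' kn m'k km; have [Kk|kK] := ltnP K k; first by rewrite H ?mulr0.
    case: (w n k m' 0 K =P 0%N) => [->|/eqP /w_supp hs]; first by rewrite mul0r.
    exfalso; move: km; case: (k =P K) => [e|/eqP]; last by lia.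
    rewrite /=; case: (m' =P K) => //; lia.
  rewrite w_int ?binn ?mul1r //; lia.
set u := (K - m)%N.
have u0 : (0 < u)%N by rewrite /u; lia.
have m0' : (0 < m)%N by lia.
have r1 := rel (leq_ltn_trans (leq_subr m K) Kn) (leq_ltn_trans mK Kn).
have r2 := rel (leq_ltn_trans (leq_subr 1 u) (leq_ltn_trans (leq_subr m K) Kn))
               (leq_ltn_trans (leq_subr 1 m) (leq_ltn_trans mK Kn)).
have : \sum_(k < n) \sum_(m' < k.+1) (w n k m' u m)%:R * g k m' -
  \sum_(k < n) \sum_(m' < k.+1) (w n k m' (u - 1) (m - 1))%:R * g k m' = 0.
  by rewrite r1 r2 subrr.
rewrite -sumrB.
under eq_bigr => k _ do rewrite -sumrB.
under eq_bigr => k _ do under eq_bigr => m' _ do rewrite -mulrBl.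
rewrite (@sum2_single _ _ (fun k m' => ((w n k m' u m)%:R - (w n k m' (u - 1) (m - 1))%:R) * g k m') K m Kn mK); last first.
  move=> k m' kn m'k km; have [Kk|kK] := ltnP K k; first by rewrite H ?mulr0.
  case: (@eqP _ (u + m')%N (m + (k - m'))%N) => [e|ne].
    have kK' : (k < K)%N.
      rewrite ltn_neqAle kK andbT; apply/negP => /eqP ekK; move: km.
      rewrite ekK eqxx /=; apply/negP; rewrite negbK; apply/eqP; move: e; rewrite /u; lia.
    rewrite (@w_int n k m' u m) ?(@w_int n k m' (u - 1) (m - 1)) ?subrr ?mul0r //; move: e; rewrite /u; lia.
  rewrite (_ : w n k m' u m = 0%N); last first.
    by apply/eqP; apply: contraT => /w_supp [_ e].
  rewrite (_ : w n k m' (u - 1) (m - 1) = 0%N) ?subrr ?mul0r //.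
  apply/eqP; apply: contraT => /w_supp [_ e]; exfalso; apply: ne; lia.
rewrite (@w_int n K m u m) //; try (rewrite /u; lia).
have lt := @w_lt n K m (u - 1) (m - 1) ltac:(lia) mK.
move/eqP; rewrite mulf_eq0 => /orP[|/eqP //].
rewrite subr_eq0 eqr_nat => /eqP e; move: lt; rewrite -e ltnn.
by [].
Qed.

Lemma tri_all k m : (k < n)%N -> (m <= k)%N -> g k m = 0.
Proof.
suff : forall j K, (K < n)%N -> (n - K <= j)%N -> forall m, (m <= K)%N -> g K m = 0.
  move=> h kn mk; exact: (h (n - k)%N k kn (leqnn _) m mk).
elim=> [|j IH] K Kn hj m' m'K; first by lia.
apply: (tri_step Kn) => // k' m'' Kk kn' m''k.
apply: (IH k') => //; lia.
Qed.

End Tri.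

Section Span.
Variables (R : realType) (u v : {poly R}).

Definition Hs (k : nat) (x : {poly R}) :=
  exists mu : nat -> R, x = \sum_(m < k.+1) mu m *: (u ^+ (k - m) * v ^+ m).

Lemma Hs1 : Hs 0 1.
Proof. by exists (fun _ => 1); rewrite big_ord_recl big_ord0 addr0 /= !expr0 mulr1 scale1r. Qed.

Lemma Hs_u k x : Hs k x -> Hs k.+1 (u * x).
Proof.
case=> mu ->; exists (fun m => if (m <= k)%N then mu m else 0).
rewrite [in RHS]big_ord_recr /= ltnn scale0r addr0 mulr_sumr; apply: eq_bigr => m _.
rewrite -ltnS ltn_ord -scalerAr mulrA -exprS subSn //; by rewrite -ltnS.
Qed.

Lemma Hs_v k x : Hs k x -> Hs k.+1 (v * x).
Proof.
case=> mu ->; exists (fun m => if m is m'.+1 then mu m' else 0).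
rewrite [in RHS]big_ord_recl /= scale0r add0r mulr_sumr; apply: eq_bigr => m _.
rewrite -scalerAr /bump /= add1n subSS exprS; congr (_ *: _); ring.
Qed.

Lemma Hs_add k x y : Hs k x -> Hs k y -> Hs k (x + y).
Proof.
case=> mu -> [nu ->]; exists (fun m => mu m + nu m).
by rewrite -big_split /=; apply: eq_bigr => m _; rewrite scalerDl.
Qed.

Lemma Hs_opp k x : Hs k x -> Hs k (- x).
Proof.
case=> mu ->; exists (fun m => - mu m).
by rewrite -sumrN; apply: eq_bigr => m _; rewrite scaleNr.
Qed.

Lemma Hs_main p q : Hs (p + q) ((u - v) ^+ p * (u + v) ^+ q).
Proof.
elim: p => [|p IH].
  rewrite expr0 mul1r add0n; elim: q => [|q IHq]; first by rewrite expr0; exact: Hs1.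
  by rewrite exprS mulrDl; apply: Hs_add; [apply: Hs_u | apply: Hs_v].
rewrite exprS -mulrA mulrBl addSn; apply: Hs_add; first exact: Hs_u.
by apply: Hs_opp; apply: Hs_v.
Qed.

End Span.

Lemma span_coef (R : realType) k (c : nat -> R) :
  (forall m, (m <= k)%N -> \sum_(l < k.+1) c l * (Pk R k m)`_l = 0) ->
  forall p, (p <= k)%N -> c p = 0.
Proof.
move=> H p pk.
have [mu e] := Hs_main (1 + 'X : {poly R}) (1 - 'X) p (k - p).
rewrite subnKC // in e.
have e2 : (1 + 'X - (1 - 'X)) ^+ p * (1 + 'X + (1 - 'X)) ^+ (k - p) = (2 ^+ k)%:P * 'X^p :> {poly R}.
  rewrite (_ : 1 + 'X - (1 - 'X) = 2%:P * 'X); last by rewrite polyC_natr; ring.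
  rewrite (_ : 1 + 'X + (1 - 'X) = 2%:P); last by rewrite polyC_natr; ring.
  by rewrite exprMn -!rmorphXn mulrAC -rmorphM -natrM -expnD subnKC.
rewrite e2 in e.
have L2 : \sum_(l < k.+1) c l * (\sum_(m < k.+1) mu m *: ((1 + 'X) ^+ (k - m) * (1 - 'X) ^+ m))`_l = 0.
  under eq_bigr => l _ do rewrite coef_sum mulr_sumr.
  rewrite exchange_big /= big1 // => m _.
  under eq_bigr => l _ do rewrite coefZ mulrCA.
  by rewrite -mulr_sumr H ?mulr0 // -ltnS.
have L1 : \sum_(l < k.+1) c l * ((2 ^+ k)%:P * 'X^p : {poly R})`_l = c p * 2 ^+ k.
  under eq_bigr => l _ do rewrite coefCM coefXn.
  have pk' : (p < k.+1)%N by [].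
  rewrite (bigD1 (Ordinal pk')) //= big1 ?addr0; last first.
    move=> l /eqP lp; rewrite (_ : (l == p :> nat) = false) ?mulr0 ?mul0r //.
    by apply/negbTE/eqP => e'; apply: lp; apply: val_inj.
  by rewrite eqxx mulr1.
have : c p * 2 ^+ k = 0 by rewrite -L1 e L2.
move/eqP; rewrite mulf_eq0 => /orP[/eqP //|].
by rewrite expf_eq0 pnatr_eq0 andbF.
Qed.

Lemma witness_indep (R : realType) n' : sym_family_independent (S0 R n') (N0 R n').
Proof.
move=> c hc k l lk kn.
pose g k m := \sum_(l < k.+1) c k l * (Pk R k m)`_l.
have rel : forall i s, (i < n'.+1)%N -> (s < n'.+1)%N ->
    \sum_(k < n'.+1) \sum_(m < k.+1) (w n'.+1 k m i s)%:R * g k m = 0.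
  move=> i s hi hs.
  transitivity ((\sum_(k < n'.+1) \sum_(l < k.+1) c k l *: sym_ij (k - l) l (S0 R n') (N0 R n'))
                  (Ordinal hi) (Ordinal hs)); last by rewrite hc mxE.
  rewrite summxE; apply: eq_bigr => k' _; rewrite summxE.
  under [in RHS]eq_bigr => l' _ do
    rewrite mxE sym_ij_sy (subnK (ltn_ord l' : (l' <= k')%N)) sy_S0N0 mulr_sumr.
  rewrite exchange_big /=; apply: eq_bigr => m _.
  rewrite /g mulr_sumr; apply: eq_bigr => l' _; by rewrite mulrC mulrA.
have G := tri_all rel.
exact: (span_coef (c := c k) (fun m mk => G k m kn mk) lk).
Qed.

Section GramDef.
Variables (K : comPzRingType) (n : nat).
Definition Idx := ('I_n * 'I_n)%type.
Definition valid (p : Idx) := (p.2 <= p.1)%N.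
Definition dotm (X Y : 'M[K]_n) : K := \sum_(ij : Idx) X ij.1 ij.2 * Y ij.1 ij.2.
Definition vv (A B : 'M[K]_n) (p : Idx) := sy A B p.1 p.2.
Definition Hm (A B : 'M[K]_n) (p q : Idx) : K :=
  if valid p then (if valid q then dotm (vv A B p) (vv A B q) else 0) else (p == q)%:R.
Definition gram (A B : 'M[K]_n) : 'M[K]_#|{: Idx}| :=
  \matrix_(a, b) Hm A B (enum_val a) (enum_val b).
Definition gdet (A B : 'M[K]_n) := \det (gram A B).

Lemma dotm_suml (T : finType) (P : pred T) (a : T -> K) (X : T -> 'M[K]_n) Y :
  dotm (\sum_(t | P t) a t *: X t) Y = \sum_(t | P t) a t * dotm (X t) Y.
Proof.
rewrite /dotm; under eq_bigr => ij _ do rewrite summxE mulr_suml.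
rewrite exchange_big /=; apply: eq_bigr => t _; rewrite mulr_sumr.
by apply: eq_bigr => ij _; rewrite mxE mulrA.
Qed.

Lemma dotmC X Y : dotm X Y = dotm Y X.
Proof. by apply: eq_bigr => ij _; rewrite mulrC. Qed.

Lemma sum_valid (V : zmodType) (F : nat -> nat -> V) :
  \sum_(p : Idx | valid p) F p.1 p.2 = \sum_(k < n) \sum_(l < k.+1) F k l.
Proof.
rewrite -(pair_big_dep xpredT (fun (k : 'I_n) (l : 'I_n) => (l <= k)%N) (fun k l => F k l)) /=.
apply: eq_bigr => k _.
rewrite (big_ord_widen n (F k)) //.
Qed.
End GramDef.

Lemma map_gdet (K K' : comPzRingType) n (f : {rmorphism K -> K'}) (A B : 'M[K]_n) :
  f (gdet A B) = gdet (map_mx f A) (map_mx f B).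
Proof.
rewrite /gdet -det_map_mx; congr (\det _); apply/matrixP => a b; rewrite !mxE /Hm.
case: ifP => _; last by rewrite rmorph_nat.
case: ifP => _; last by rewrite rmorph0.
rewrite /dotm rmorph_sum; apply: eq_bigr => ij _.
by rewrite rmorphM /vv -!map_sy !mxE.
Qed.

Section GramR.
Variables (R : realType) (n' : nat).
Local Notation n := n'.+1.
Variables (A B : 'M[R]_n).

Lemma Hm_sum (x : Idx n -> R) q :
  \sum_p x p * Hm A B p q =
  if valid q then dotm (\sum_(p | valid p) x p *: vv A B p) (vv A B q) else x q.
Proof.
rewrite /Hm; case: ifP => vq.
  rewrite dotm_suml [RHS]big_mkcond; apply: eq_bigr => p _.
  case: ifP => vp //; rewrite (_ : (p == q) = false) ?mulr0 //.
  by apply/eqP => e; rewrite e vq in vp.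
rewrite (bigD1 q) //= vq eqxx mulr1 big1 ?addr0 // => p pq.
by case: ifP; rewrite ?mulr0 // (negbTE pq) mulr0.
Qed.

Lemma gdet_indep : gdet A B != 0 -> sym_family_independent A B.
Proof.
move=> hd c hc.
pose x (p : Idx n) := if valid p then c p.1 p.2 else 0.
have hV : \sum_(p | valid p) x p *: vv A B p = 0.
  rewrite -[RHS]hc -(@sum_valid n _ (fun k l => c k l *: sym_ij (k - l) l A B)).
  by apply: eq_bigr => p vp; rewrite /x vp /vv sym_ij_sy subnK.
have hx : (\row_(a < #|{: Idx n}|) x (enum_val a)) *m gram A B = 0.
  apply/rowP => b; rewrite !mxE.
  under eq_bigr => a _ do rewrite !mxE.
  rewrite -(big_enum_val (fun p => x p * Hm A B p (enum_val b))) /=.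
  rewrite Hm_sum hV.
  case: ifP => vq; first by rewrite /dotm big1 // => ij _; rewrite mxE mul0r.
  by rewrite /x vq.
have x0 : (\row_(a < #|{: Idx n}|) x (enum_val a)) = 0.
  case: (eqVneq (\row_(a < #|{: Idx n}|) x (enum_val a)) 0) => // nz.
  by case/negP: hd; apply/det0P; exists (\row_(a < #|{: Idx n}|) x (enum_val a)).
move=> k l lk kn.
have ln : (l < n)%N by apply: leq_ltn_trans lk kn.
have := congr1 (fun v : 'rV_ _ => v 0 (enum_rank ((Ordinal kn, Ordinal ln) : Idx n))) x0.
by rewrite !mxE enum_rankK /x /valid /= lk.
Qed.

Lemma dotm_ge0 (X : 'M[R]_n) : 0 <= dotm X X.
Proof. by apply: sumr_ge0 => ij _; rewrite -expr2 sqr_ge0. Qed.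

Lemma dotm_eq0 (X : 'M[R]_n) : dotm X X = 0 -> X = 0.
Proof.
move=> h; apply/matrixP => i j; rewrite mxE.
have H := @psumr_eq0P _ _ xpredT (fun ij : Idx n => X ij.1 ij.2 ^+ 2) (fun ij _ => sqr_ge0 _).
have h2 : \sum_(ij : Idx n) X ij.1 ij.2 ^+ 2 = 0.
  by rewrite -[RHS]h; apply: eq_bigr => ij _; rewrite expr2.
by have /eqP := H h2 (i, j) isT; rewrite sqrf_eq0 => /eqP.
Qed.

Lemma indep_gdet : sym_family_independent A B -> gdet A B != 0.
Proof.
move=> hind; apply/negP => /det0P [v nz hv].
pose x (p : Idx n) : R := v 0 (enum_rank p).
pose V := \sum_(p | valid p) x p *: vv A B p.
have h0 : \sum_q x q * (\sum_p x p * Hm A B p q) = 0.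
  transitivity (\sum_b v 0 b * (v *m gram A B) 0 b); last first.
    by rewrite hv big1 // => b _; rewrite mxE mulr0.
  rewrite (big_enum_val (fun q => x q * (\sum_p x p * Hm A B p q))) /=.
  apply: eq_bigr => b _; rewrite /x enum_valK mxE; congr (_ * _).
  rewrite (big_enum_val (fun p => v 0 (enum_rank p) * Hm A B p (enum_val b))) /=.
  by apply: eq_bigr => a _; rewrite enum_valK mxE.
have h1 : \sum_q x q * (if valid q then dotm V (vv A B q) else x q) = 0.
  by rewrite -[RHS]h0; apply: eq_bigr => q _; rewrite Hm_sum.
rewrite (bigID (@valid n)) /= in h1.
have e1 : \sum_(q | valid q) x q * (if valid q then dotm V (vv A B q) else x q) = dotm V V.
  transitivity (\sum_(q | valid q) x q * dotm (vv A B q) V).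
    by apply: eq_bigr => q vq; rewrite vq dotmC.
  by rewrite -dotm_suml.
have e2 : \sum_(q | ~~ valid q) x q * (if valid q then dotm V (vv A B q) else x q)
          = \sum_(q | ~~ valid q) x q ^+ 2.
  by apply: eq_bigr => q vq; rewrite (negbTE vq) expr2.
rewrite e1 e2 in h1.
have /andP[/eqP V0' /eqP S0'] : (dotm V V == 0) && (\sum_(q | ~~ valid q) x q ^+ 2 == 0).
  by rewrite -paddr_eq0 ?h1 ?dotm_ge0 // sumr_ge0 // => q _; rewrite sqr_ge0.
have V0 := dotm_eq0 V0'.
have inv : forall q, ~~ valid q -> x q = 0.
  move=> q vq; have /eqP := psumr_eq0P (fun q _ => sqr_ge0 (x q)) S0' vq.
  by rewrite sqrf_eq0 => /eqP.
pose c k l := x (inord k, inord l).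
have hc : \sum_(k < n) \sum_(l < k.+1) c k l *: sym_ij (k - l) l A B = 0.
  rewrite -(@sum_valid n _ (fun k l => c k l *: sym_ij (k - l) l A B)) -[RHS]V0 /V.
  apply: eq_bigr => p vp; rewrite /c sym_ij_sy subnK // /vv.
  by case: p vp => a b /= _; rewrite !inord_val.
have cz := hind c hc.
have xz : forall p, x p = 0.
  move=> p; case: (boolP (valid p)) => vp; last exact: inv.
  have := cz p.1 p.2 vp (ltn_ord p.1); rewrite /c.
  by case: p vp => a b /= _; rewrite !inord_val.
apply: (negP nz); apply/eqP/rowP => b; rewrite mxE.
by have := xz (enum_val b); rewrite /x enum_valK => ->.
Qed.

End GramR.

Section Cont.
Variables (R : realType) (n : nat).
Local Notation T := ('M[R]_n * 'M[R]_n)%type.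

Definition ctn (f : T -> R) := continuous f.

Lemma ctn_fst i j : ctn (fun AB : T => AB.1 i j).
Proof.
move=> x; apply: (@continuous_comp _ _ _ fst (fun M : 'M[R]_n => M i j)).
  exact: cvg_fst.
exact: coord_continuous.
Qed.

Lemma ctn_snd i j : ctn (fun AB : T => AB.2 i j).
Proof.
move=> x; apply: (@continuous_comp _ _ _ snd (fun M : 'M[R]_n => M i j)).
  exact: cvg_snd.
exact: coord_continuous.
Qed.

Lemma ctnM (f g : T -> R) : ctn f -> ctn g -> ctn (fun x => f x * g x).
Proof. move=> hf hg x; exact: (@continuousM R _ f g x (hf x) (hg x)). Qed.

Lemma ctnD (f g : T -> R) : ctn f -> ctn g -> ctn (fun x => f x + g x).
Proof. move=> hf hg x; exact: (@continuousD R R^o T f g x (hf x) (hg x)). Qed.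

Lemma ctnC (c : R) : ctn (fun x : T => c).
Proof. move=> x; exact: cst_continuous. Qed.

Lemma ctn_sum (I : Type) (r : seq I) (P : pred I) (F : I -> T -> R) :
  (forall i, ctn (F i)) -> ctn (fun x => \sum_(i <- r | P i) F i x).
Proof.
move=> h; elim: r => [|a r IH].
  by under eq_fun do rewrite big_nil; exact: ctnC.
under eq_fun do rewrite big_cons.
case: (P a); last exact: IH.
exact: ctnD.
Qed.

Lemma ctn_prod (I : Type) (r : seq I) (P : pred I) (F : I -> T -> R) :
  (forall i, ctn (F i)) -> ctn (fun x => \prod_(i <- r | P i) F i x).
Proof.
move=> h; elim: r => [|a r IH].
  by under eq_fun do rewrite big_nil; exact: ctnC.
under eq_fun do rewrite big_cons.
case: (P a); last exact: IH.
exact: ctnM.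
Qed.

Lemma ctn_sy k m i j : ctn (fun AB : T => sy AB.1 AB.2 k m i j).
Proof.
elim: k m i j => [|k IH] m i j /=.
  by case: (m == 0%N); rewrite /=; under eq_fun do rewrite mxE; exact: ctnC.
under eq_fun do rewrite mxE.
apply: ctnD.
  under eq_fun do rewrite mxE.
  apply: ctn_sum => r; apply: ctnM; [exact: ctn_fst | exact: IH].
case: m => [|m]; first by under eq_fun do rewrite mxE; exact: ctnC.
under eq_fun do rewrite mxE.
apply: ctn_sum => r; apply: ctnM; [exact: ctn_snd | exact: IH].
Qed.

Lemma ctn_gdet : ctn (fun AB : T => gdet AB.1 AB.2).
Proof.
have hH p q : ctn (fun AB : T => Hm AB.1 AB.2 p q).
  rewrite /Hm; case: (valid p) => /=; last exact: ctnC.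
  case: (valid q) => /=; last exact: ctnC.
  rewrite /dotm; apply: ctn_sum => ij; apply: ctnM; exact: ctn_sy.
rewrite /gdet; unfold determinant.
apply: ctn_sum => s; apply: ctnM; first exact: ctnC.
apply: ctn_prod => i; under eq_fun do rewrite mxE; exact: hH.
Qed.

End Cont.

Section Dense.
Variables (R : realType) (n : nat).

Lemma poly_nonroot (q : {poly R}) (e : R) : q != 0 -> 0 < e ->
  exists t, 0 < t < e /\ q.[t] != 0.
Proof.
move=> q0 e0; apply/not_existsP => H.
pose s := [seq e / (i.+2)%:R | i <- iota 0 (size q)].
have us : uniq s.
  rewrite map_inj_uniq ?iota_uniq // => i j /(mulfI (lt0r_neq0 e0)) /invr_inj /eqP.
  by rewrite eqr_nat => /eqP [].
have rs : all (root q) s.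
  apply/allP => x /mapP [i _ ->]; apply/negPn/negP => nr; apply: (H (e / (i.+2)%:R)).
  split=> //; apply/andP; split; first by rewrite divr_gt0 // ltr0n.
  by rewrite ltr_pdivrMr ?ltr0n // ltr_pMr // ltr1n.
have := max_poly_roots q0 rs us; by rewrite size_map size_iota ltnn.
Qed.

Lemma path_poly (A B A0 B0 : 'M[R]_n) : exists q : {poly R}, forall t,
  q.[t] = gdet (A + t *: (A0 - A)) (B + t *: (B0 - B)).
Proof.
exists (gdet (map_mx polyC A + 'X *: map_mx polyC (A0 - A))
             (map_mx polyC B + 'X *: map_mx polyC (B0 - B))) => t.
rewrite -horner_evalE map_gdet; congr gdet; apply/matrixP => i j;
  by rewrite !mxE /= horner_evalE hornerD hornerM hornerX !hornerC.
Qed.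

Lemma near_good (V : set ('M[R]_n * 'M[R]_n)) (A B A0 B0 : 'M[R]_n) :
  gdet A0 B0 != 0 -> nbhs (A, B) V ->
  exists t : R, V (A + t *: (A0 - A), B + t *: (B0 - B)) /\
    gdet (A + t *: (A0 - A)) (B + t *: (B0 - B)) != 0.
Proof.
move=> g0 hV.
pose pth (t : R) := (A + t *: (A0 - A), B + t *: (B0 - B)).
have cA : {for 0, continuous (fun t : R => A + t *: (A0 - A))}.
  apply: cvgD; first exact: cvg_cst.
  by apply: cvgZr_tmp; exact: cvg_id.
have cB : {for 0, continuous (fun t : R => B + t *: (B0 - B))}.
  apply: cvgD; first exact: cvg_cst.
  by apply: cvgZr_tmp; exact: cvg_id.
have hV' : nbhs (0 : R) (pth @^-1` V).
  case: hV => -[U1 U2] /= [hU1 hU2] sub.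
  have h1 : nbhs (0 : R) ((fun t : R => A + t *: (A0 - A)) @^-1` U1).
    by apply: cA; rewrite scale0r addr0.
  have h2 : nbhs (0 : R) ((fun t : R => B + t *: (B0 - B)) @^-1` U2).
    by apply: cB; rewrite scale0r addr0.
  by apply: filterS (filterI h1 h2) => t [t1 t2]; apply: sub; split.
have [e e0 he] := (nbhs_ballP _ _).1 hV'.
have [q hq] := path_poly A B A0 B0.
have q1 : q.[1] = gdet A0 B0.
  by rewrite hq !scale1r [A + _]addrC [B + _]addrC !subrK.
have q0 : q != 0 by apply: contraNneq g0 => e'; rewrite -q1 e' horner0.
have [t [/andP [t0 te] qt]] := poly_nonroot q0 e0.
exists t; split; last by rewrite -hq.
apply: (he t); rewrite -ball_normE /ball_ /= sub0r normrN gtr0_norm //.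
Qed.
End Dense.

Lemma S0_sym (R : realType) n' : mx_is_symmetric (S0 R n').
Proof. by rewrite /mx_is_symmetric /S0 linearD /= trmxK addrC. Qed.

Lemma N0_skew (R : realType) n' : mx_is_skew (N0 R n').
Proof. by rewrite /mx_is_skew /N0 linearB /= trmxK opprB. Qed.

Lemma aux_skew (R : realType) (V : lmodType R) (t : R) (v w : V) :
  - v + t *: (- w - - v) = - (v + t *: (w - v)).
Proof.
rewrite (_ : - w - - v = - (w - v)); last by rewrite opprD.
by rewrite scalerN opprD.
Qed.

Unset Implicit Arguments.

Theorem lemma4p1 (R : realType) (n : nat) :
  (* (a) *)
  (forall (A B : 'M[R]_n) (i j : nat),
      lie_br (sym_ij i j.+1 A B) A + lie_br (sym_ij i.+1 j A B) B = 0)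
  /\
  (* (b) *)
  (forall (S N : 'M[R]_n) (i j : nat), mx_is_symmetric S -> mx_is_skew N ->
      (~~ odd j -> mx_is_symmetric (sym_ij i j S N)) /\ (odd j -> mx_is_skew (sym_ij i j S N)))
  /\
  (* (c) *)
  (forall (A B : 'M[R]_n) (l : nat), (l <= n)%N ->
      exists c : nat -> nat -> R,
        sym_ij (n - l) l A B = \sum_(r < n) \sum_(s < n - r) c r s *: sym_ij r s A B)
  /\
  (* (d), general pairs: an open dense set of pairs on which the family is independent *)
  (exists U : set ('M[R]_n * 'M[R]_n),
      open U /\ dense U /\ (forall AB, U AB -> sym_family_independent AB.1 AB.2))
  /\
  (* (d), symmetric/skew pairs: a relatively open, relatively dense subset of
     {(S,N) | S symmetric, N skew-symmetric} on which the family is independent *)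
  (exists U : set ('M[R]_n * 'M[R]_n),
      open U /\
      (forall S N : 'M[R]_n, mx_is_symmetric S -> mx_is_skew N ->
         forall V, nbhs (S, N) V ->
           exists S' N' : 'M[R]_n, [/\ mx_is_symmetric S', mx_is_skew N', V (S', N') & U (S', N')]) /\
      (forall S N : 'M[R]_n, mx_is_symmetric S -> mx_is_skew N -> U (S, N) ->
         sym_family_independent S N)).
Proof.
split.
  move=> A B i j; rewrite !sym_ij_sy addnS addSn; exact: lie_sy.
split.
  move=> S N i j hS hN; rewrite /mx_is_symmetric /mx_is_skew sym_ij_sy (sy_tr _ _ hS hN).
  split=> hj; rewrite -signr_odd.
    by rewrite (negbTE hj) expr0 scale1r.
  by rewrite hj expr1 scaleN1r.
case: n => [|n'].
  split.
    move=> A B l _; exists (fun _ _ => 0); apply/matrixP => -[] //.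
  have ind0 : forall A B : 'M[R]_0, sym_family_independent A B by move=> A B c _ k l _.
  split.
    exists setT; split; first exact: openT.
    split; last by move=> AB _; exact: ind0.
    by move=> O [x Ox] _; exists x.
  exists setT; split; first exact: openT.
  split; last by move=> S N _ _ _; exact: ind0.
  move=> S N hS hN V hV; exists S, N; split => //; exact: nbhs_singleton hV.
have g0 : gdet (S0 R n') (N0 R n') != 0 := indep_gdet (@witness_indep R n').
have oU : open [set AB : 'M[R]_n'.+1 * 'M[R]_n'.+1 | gdet AB.1 AB.2 != 0].
  apply: (@open_comp _ _ (fun AB : 'M[R]_n'.+1 * 'M[R]_n'.+1 => gdet AB.1 AB.2) [set x | x != 0]).
    by move=> x _; exact: ctn_gdet.
  exact: open_neq.
split.
  move=> A B l ln; exists (fun r s => cc A B l (r + s) s).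
  rewrite sym_ij_sy subnK // (CH_sy A B l).
  under [RHS]eq_bigr => r _ do under eq_bigr => s _ do rewrite sym_ij_sy.
  symmetry; exact: (@reidx _ n'.+1 (fun k s => cc A B l k s *: sy A B k s)).
split.
  exists [set AB | gdet AB.1 AB.2 != 0]; split => //; split; last first.
    by move=> AB hAB; exact: gdet_indep.
  move=> O [[A B] OAB] oO.
  have hn : nbhs (A, B) O by move: oO; rewrite openE => /(_ _ OAB).
  have [t [Vt gt]] := near_good g0 hn.
  by exists (A + t *: (S0 R n' - A), B + t *: (N0 R n' - B)).
exists [set AB | gdet AB.1 AB.2 != 0]; split => //; split; last first.
  by move=> S N _ _ hU; exact: gdet_indep.
move=> S N hS hN V hV.
have [t [Vt gt]] := near_good g0 hV.
exists (S + t *: (S0 R n' - S)), (N + t *: (N0 R n' - N)); split => //.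
  by rewrite /mx_is_symmetric linearD linearZ linearB /= hS S0_sym.
rewrite /mx_is_skew linearD linearZ linearB /= hN N0_skew.
exact: aux_skew.
Qed.
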